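(* Let $p,r$ be positive integers, $q=p+r$, and let $\Phi^*:V^*_{pq}(\mathbb{H})\to\mathbb{C}^{r\times 2p}$ be the map $$\Phi^*(Q)=\begin{pmatrix}U & -V\end{pmatrix}\begin{pmatrix}Z-X & Y-W\\ \bar Y+\bar W & \bar Z+\bar X\end{pmatrix}^{-1},$$ where $Q=(Q_0;Q_1;Q_2)$ with $Q_0=Z+Wj$, $Q_1=X+Yj$, $Q_2=U+Vj$ ($Z,W,X,Y\in\mathbb{C}^{p\times p}$, $U,V\in\mathbb{C}^{r\times p}$). Then the complex valued components of $\Phi^*$ constitute an orthogonal harmonic family of $\mathbf{GL}_p(\mathbb{H})$-invariant functions on $V^*_{pq}(\mathbb{H})$, equipped with the Euclidean metric.
   Context: $\mathbb{H}=\{z+wj: z,w\in\mathbb{C}\}$. $U^*_{pq}(\mathbb{H})=\{Q\in\mathbb{H}^{(p+q)\times p}: Q^*Q \text{ invertible}\}$, with $Q_0,Q_1$ having $p$ rows and $Q_2$ having $r$ rows, and $V^*_{pq}(\mathbb{H})=\{Q\in U^*_{pq}(\mathbb{H}): \det\begin{pmatrix}Z-X & Y-W\\ \bar Y+\bar W & \bar Z+\bar X\end{pmatrix}\neq0\}$. $\mathbf{GL}_p(\mathbb{H})$ acts by right multiplication. The Euclidean metric is $\langle X,Y\rangle=\mathfrak{Re}\,\mathrm{trace}(X^*Y)$. For a Riemannian manifold $(M,g)$ and complex functions $\phi,\psi$, $\tau(\phi)$ is the Laplace–Beltrami operator (extended complex-linearly) and $\kappa(\phi,\psi)=g(\mathrm{grad}\,\phi,\mathrm{grad}\,\psi)$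 with $g$ extended complex-bilinearly. A set $\Omega$ of complex functions is an orthogonal harmonic family if $\tau(\phi)=0$ and $\kappa(\phi,\psi)=0$ for all $\phi,\psi\in\Omega$. *)

(* Defs.v *)
From mathcomp Require Import all_boot all_algebra.
From mathcomp Require Import all_classical all_reals all_analysis.
From mathcomp.real_closed Require Import complex.
Import GRing.Theory Num.Theory.
Local Open Scope ring_scope.
Local Open Scope complex_scope.

Set Implicit Arguments.
Unset Strict Implicit.
Unset Printing Implicit Defensive.

(* Quaternionic matrices: an m x n matrix over H = {z + w j} is stored  *)
(* as a pair (A, B) of complex m x n matrices, meaning A + B j.         *)
Definition hmat (R : realType) (m n : nat) : Type :=
  ('M[R[i]]_(m, n) * 'M[R[i]]_(m, n))%type.

Definition cconj (R : realType) (m n : nat) (A : 'M[R[i]]_(m, n)) :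
  'M[R[i]]_(m, n) := map_mx (@conjc R) A.

(* (A + B j)(C + D j) = (A C - B conj(D)) + (A D + B conj(C)) j,
   using j c = conj(c) j and j^2 = -1. *)
Definition hmul (R : realType) (m n k : nat)
  (P : hmat R m n) (Q : hmat R n k) : hmat R m k :=
  (P.1 *m Q.1 - P.2 *m cconj Q.2, P.1 *m Q.2 + P.2 *m cconj Q.1).

(* quaternionic conjugate transpose: (A + B j)^* = A^* - B^T j *)
Definition hadj (R : realType) (m n : nat) (P : hmat R m n) : hmat R n m :=
  ((cconj P.1)^T, - (P.2)^T).

Definition hone (R : realType) (n : nat) : hmat R n n := (1%:M, 0).

Definition hinvertible (R : realType) (n : nat) (g : hmat R n n) : Prop :=
  exists h : hmat R n n, hmul g h = hone R n /\ hmul h g = hone R n.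

(* The block decomposition Q = (Q0; Q1; Q2) for Q in H^{(p+q) x p},    *)
(* q = p + r, Q0 = Z + W j, Q1 = X + Y j, Q2 = U + V j.                 *)
Section Blocks.
Variables (R : realType) (p r : nat).
Local Notation HM := (hmat R (p + (p + r)) p).

Definition blkZ (Q : HM) : 'M[R[i]]_p := usubmx Q.1.
Definition blkW (Q : HM) : 'M[R[i]]_p := usubmx Q.2.
Definition blkX (Q : HM) : 'M[R[i]]_p := usubmx (dsubmx Q.1).
Definition blkY (Q : HM) : 'M[R[i]]_p := usubmx (dsubmx Q.2).
Definition blkU (Q : HM) : 'M[R[i]]_(r, p) := dsubmx (dsubmx Q.1).
Definition blkV (Q : HM) : 'M[R[i]]_(r, p) := dsubmx (dsubmx Q.2).

Definition Mstar (Q : HM) : 'M[R[i]]_(p + p) :=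
  block_mx (blkZ Q - blkX Q) (blkY Q - blkW Q)
           (cconj (blkY Q) + cconj (blkW Q)) (cconj (blkZ Q) + cconj (blkX Q)).

Definition in_Ustar (Q : HM) : Prop := hinvertible (hmul (hadj Q) Q).

Definition in_Vstar (Q : HM) : Prop := in_Ustar Q /\ \det (Mstar Q) != 0.

Definition Phistar (Q : HM) : 'M[R[i]]_(r, p + p) :=
  row_mx (blkU Q) (- blkV Q) *m invmx (Mstar Q).
End Blocks.

(* Euclidean calculus on H^{m x n} with <X,Y> = Re trace(X^* Y).        *)
(* For entry (a,b), the real coordinates Re z, Im z, Re w, Im w of     *)
(* z + w j form an orthonormal system, so the directions below are an  *)
(* orthonormal basis of (H^{m x n}, <,>).                              *)
Section Calculus.
Variables (R : realType) (m n : nat).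
Local Notation HM := (hmat R m n).

Definition hadd (P Q : HM) : HM := (P.1 + Q.1, P.2 + Q.2).
Definition hscale (t : R) (P : HM) : HM := (t%:C *: P.1, t%:C *: P.2).

Definition hdir (a : 'I_m) (b : 'I_n) (k : 'I_4) : HM :=
  match val k with
  | 0 => (delta_mx a b, 0)
  | 1 => ('i%C *: delta_mx a b, 0)
  | 2 => (0, delta_mx a b)
  | _ => (0, 'i%C *: delta_mx a b)
  end.

Definition hline (f : HM -> R[i]) (Q E : HM) (t : R) : R[i] :=
  f (hadd Q (hscale t E)).

Definition hpartial (f : HM -> R[i]) (E : HM) (Q : HM) : R[i] :=
  (derive1 (fun t => complex.Re (hline f Q E t)) 0)%:C
  + 'i%C * (derive1 (fun t => complex.Im (hline f Q E t)) 0)%:C.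

Definition hderivable (f : HM -> R[i]) (E Q : HM) : Prop :=
  derivable (fun t => complex.Re (hline f Q E t)) 0 1 /\
  derivable (fun t => complex.Im (hline f Q E t)) 0 1.

Definition twice_partially_derivable (f : HM -> R[i]) (Q : HM) : Prop :=
  forall (a : 'I_m) (b : 'I_n) (k : 'I_4) (a' : 'I_m) (b' : 'I_n) (k' : 'I_4),
    hderivable f (hdir a b k) Q /\
    hderivable (hpartial f (hdir a b k)) (hdir a' b' k') Q.

Definition tau (f : HM -> R[i]) (Q : HM) : R[i] :=
  \sum_(a < m) \sum_(b < n) \sum_(k < 4)
     hpartial (hpartial f (hdir a b k)) (hdir a b k) Q.

Definition kappa (f g : HM -> R[i]) (Q : HM) : R[i] :=
  \sum_(a < m) \sum_(b < n) \sum_(k < 4)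
     hpartial f (hdir a b k) Q * hpartial g (hdir a b k) Q.

Definition orthogonal_harmonic_family (I : Type) (Omega : I -> HM -> R[i])
  (D : HM -> Prop) : Prop :=
  forall Q, D Q ->
    (forall i, twice_partially_derivable (Omega i) Q) /\
    (forall i, tau (Omega i) Q = 0) /\
    (forall i j, kappa (Omega i) (Omega j) Q = 0).
End Calculus.

(* Main.v *)
Require Import Defs.
From mathcomp Require Import all_boot all_algebra.
From mathcomp Require Import all_classical all_reals all_analysis.
From mathcomp.real_closed Require Import complex.
From mathcomp Require Import ring.
Import GRing.Theory Num.Theory.
Import numFieldNormedType.Exports.
Local Open Scope classical_set_scope.
Local Open Scope ring_scope.

Set Implicit Arguments.
Unset Strict Implicit.
Unset Printing Implicit Defensive.


Section Scal.
Variable R : realType.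
Local Open Scope complex_scope.

Definition cder (h : R -> R[i]) (x : R) (d : R[i]) :=
  is_derive x 1 (fun t => complex.Re (h t)) (complex.Re d) /\
  is_derive x 1 (fun t => complex.Im (h t)) (complex.Im d).

Definition cdable (h : R -> R[i]) (x : R) :=
  derivable (fun t => complex.Re (h t)) x 1 /\
  derivable (fun t => complex.Im (h t)) x 1.

Definition cdv (h : R -> R[i]) (x : R) : R[i] :=
  Complex ('D_1 (fun t => complex.Re (h t)) x) ('D_1 (fun t => complex.Im (h t)) x).

Lemma cdable_cder h x : cdable h x -> cder h x (cdv h x).
Proof. by case=> h1 h2; split; apply: derivableP. Qed.

Lemma cder_cdable h x d : cder h x d -> cdable h x.
Proof. by case=> [[h1 _] [h2 _]]; split. Qed.

Lemma cder_ext h g x d : (forall t, h t = g t) -> cder g x d -> cder h x d.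
Proof. by move=> e; have -> : h = g by apply/funext. Qed.

Lemma cder_eqd h x d d' : d = d' -> cder h x d -> cder h x d'.
Proof. by move=> ->. Qed.

Lemma cder_unique h x d d' : cder h x d -> cder h x d' -> d = d'.
Proof.
case=> h1 h2 [h1' h2'].
have e1 := @derive_val _ _ _ _ _ _ _ h1; have e2 := @derive_val _ _ _ _ _ _ _ h2.
have e1' := @derive_val _ _ _ _ _ _ _ h1'; have e2' := @derive_val _ _ _ _ _ _ _ h2'.
case: d d' e1 e2 e1' e2' {h1 h2 h1' h2'} => a b [a' b'] /= -> -> -> ->.
by [].
Qed.

Lemma cder_cst c x : cder (fun _ => c) x 0.
Proof. by split; apply: is_derive_cst. Qed.

Lemma cder_id x : cder (fun t => t%:C) x 1.
Proof. split => /=; [exact: is_derive_id | exact: is_derive_cst]. Qed.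

Lemma is_derive_ext (f g : R -> R) (x d : R) : (forall t, f t = g t) ->
  is_derive x (1:R) g d -> is_derive x (1:R) f d.
Proof. by move=> e; have -> : f = g by apply/funext. Qed.

Lemma cder_add h g x dh dg : cder h x dh -> cder g x dg ->
  cder (fun t => h t + g t) x (dh + dg).
Proof.
case=> h1 h2 [g1 g2]; split.
- apply: is_derive_ext (is_derive_eq (is_deriveD h1 g1) _) => [t|].
    by rewrite !fctE; case: (h t) (g t) => a b [c d].
  by case: dh dg {h1 h2 g1 g2} => a b [c d].
- apply: is_derive_ext (is_derive_eq (is_deriveD h2 g2) _) => [t|].
    by rewrite !fctE; case: (h t) (g t) => a b [c d].
  by case: dh dg {h1 h2 g1 g2} => a b [c d].
Qed.

Lemma cder_opp h x dh : cder h x dh -> cder (fun t => - h t) x (- dh).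
Proof.
case=> h1 h2; split.
- apply: is_derive_ext (is_derive_eq (is_deriveN h1) _) => [t|].
    by rewrite !fctE; case: (h t) => a b.
  by case: dh {h1 h2} => a b.
- apply: is_derive_ext (is_derive_eq (is_deriveN h2) _) => [t|].
    by rewrite !fctE; case: (h t) => a b.
  by case: dh {h1 h2} => a b.
Qed.

Lemma cder_mul h g x dh dg : cder h x dh -> cder g x dg ->
  cder (fun t => h t * g t) x (h x * dg + dh * g x).
Proof.
case=> h1 h2 [g1 g2]; split.
- have := is_deriveB (is_deriveM h1 g1) (is_deriveM h2 g2).
  move/is_derive_eq => /(_ _ erefl) H.
  apply: is_derive_ext (is_derive_eq H _) => [t|].
    by rewrite !fctE; case: (h t) (g t) => a b [c d].
  case: dh dg (h x) (g x) {h1 h2 g1 g2 H} => a b [c d] [e f] [k l] /=.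
  rewrite /GRing.scale /=. ring.
- have := is_deriveD (is_deriveM h1 g2) (is_deriveM h2 g1).
  move/is_derive_eq => /(_ _ erefl) H.
  apply: is_derive_ext (is_derive_eq H _) => [t|].
    by rewrite !fctE; case: (h t) (g t) => a b [c d].
  case: dh dg (h x) (g x) {h1 h2 g1 g2 H} => a b [c d] [e f] [k l] /=.
  rewrite /GRing.scale /=. ring.
Qed.

Lemma cdable_add h g x : cdable h x -> cdable g x -> cdable (fun t => h t + g t) x.
Proof. by move=> /cdable_cder a /cdable_cder b; apply: cder_cdable (cder_add a b). Qed.

Lemma cdable_mul h g x : cdable h x -> cdable g x -> cdable (fun t => h t * g t) x.
Proof. by move=> /cdable_cder a /cdable_cder b; apply: cder_cdable (cder_mul a b). Qed.

Lemma cdable_cst c x : cdable (fun _ => c) x.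
Proof. exact: cder_cdable (cder_cst c x). Qed.

Lemma cdable_ext h g x : (forall t, h t = g t) -> cdable g x -> cdable h x.
Proof. by move=> e; have -> : h = g by apply/funext. Qed.

Lemma cdable_sum (I : Type) (s : seq I) (P : pred I) (h : I -> R -> R[i]) x :
  (forall i, cdable (h i) x) -> cdable (fun t => \sum_(i <- s | P i) h i t) x.
Proof.
move=> H; elim: s => [|a s IH].
  by apply: cdable_ext (cdable_cst 0 x) => t; rewrite big_nil.
case Pa: (P a).
  by apply: cdable_ext (cdable_add (H a) IH) => t; rewrite big_cons Pa.
by apply: cdable_ext IH => t; rewrite big_cons Pa.
Qed.

Lemma cdable_prod (I : Type) (s : seq I) (P : pred I) (h : I -> R -> R[i]) x :
  (forall i, cdable (h i) x) -> cdable (fun t => \prod_(i <- s | P i) h i t) x.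
Proof.
move=> H; elim: s => [|a s IH].
  by apply: cdable_ext (cdable_cst 1 x) => t; rewrite big_nil.
case Pa: (P a).
  by apply: cdable_ext (cdable_mul (H a) IH) => t; rewrite big_cons Pa.
by apply: cdable_ext IH => t; rewrite big_cons Pa.
Qed.

Lemma cder_sum (I : Type) (s : seq I) (P : pred I) (h : I -> R -> R[i]) (d : I -> R[i]) x :
  (forall i, cder (h i) x (d i)) ->
  cder (fun t => \sum_(i <- s | P i) h i t) x (\sum_(i <- s | P i) d i).
Proof.
move=> H; elim: s => [|a s IH].
  by apply: cder_ext (cder_eqd _ (cder_cst 0 x)) => [t|]; rewrite big_nil.
case Pa: (P a).
  by apply: cder_ext (cder_eqd _ (cder_add (H a) IH)) => [t|]; rewrite big_cons Pa.
by apply: cder_ext (cder_eqd _ IH) => [t|]; rewrite big_cons Pa.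
Qed.

Lemma derivable_ext (f g : R -> R) (x : R) : (forall t, f t = g t) ->
  derivable g x (1:R) -> derivable f x (1:R).
Proof. by move=> e; have -> : f = g by apply/funext. Qed.

Lemma sqr_add_neq0 (a b : R) : (a +i* b) != 0 -> a ^+ 2 + b ^+ 2 != 0.
Proof.
apply: contra; rewrite paddr_eq0 ?sqr_ge0 // => /andP[].
by rewrite !sqrf_eq0 => /eqP -> /eqP ->.
Qed.

Lemma Re_inv (z : R[i]) : complex.Re (z^-1) =
  complex.Re z / (complex.Re z ^+ 2 + complex.Im z ^+ 2).
Proof. by case: z. Qed.

Lemma Im_inv (z : R[i]) : complex.Im (z^-1) =
  - (complex.Im z / (complex.Re z ^+ 2 + complex.Im z ^+ 2)).
Proof. by case: z. Qed.

Lemma cdable_inv h x : h x != 0 -> cdable h x -> cdable (fun t => (h t)^-1) x.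
Proof.
move=> nz [d1 d2].
set f := fun t => complex.Re (h t); set g := fun t => complex.Im (h t).
have dn : derivable (f ^+ 2 + g ^+ 2) x 1.
  by apply: derivableD; apply: derivableX.
have nzn : (f ^+ 2 + g ^+ 2) x != 0.
  by rewrite !fctE /f /g; move: nz; case: (h x) => a b; apply: sqr_add_neq0.
have dv := derivableV nzn dn.
split.
- apply: derivable_ext (derivableM d1 dv) => t.
  by rewrite Re_inv !fctE.
- apply: derivable_ext (derivableN (derivableM d2 dv)) => t.
  by rewrite Im_inv !fctE.
Qed.


Lemma cder_near h g (x : R) d : (\forall t \near x, h t = g t) -> cder h x d -> cder g x d.
Proof.
move=> H [h1 h2]; split.
- apply: near_eq_is_derive h1; move: H; apply: filterS => t ->; done.
- apply: near_eq_is_derive h2; move: H; apply: filterS => t ->; done.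
Qed.

Lemma cdable_near h g (x : R) : (\forall t \near x, h t = g t) -> cdable h x -> cdable g x.
Proof. by move=> H /cdable_cder/(cder_near H)/cder_cdable. Qed.

Lemma cont_of_derivable (f : R -> R) x : derivable f x (1:R) -> f @ x --> f x.
Proof. by move/derivable1_diffP/differentiable_continuous. Qed.

Lemma cdable_near_neq0 h (x : R) : cdable h x -> h x != 0 -> \forall t \near x, h t != 0.
Proof.
case=> d1 d2; case E: (h x) => [a b] nz.
have [a0|a0] := eqVneq a 0.
- have b0 : b != 0 by move: nz; rewrite a0; apply: contra => /eqP ->.
  have := @cvgr_neq0 _ _ _ _ _ _ _ (cont_of_derivable d2); rewrite E => /(_ _ b0).
  by apply: filterS => t; apply: contra => /eqP ->.
- have := @cvgr_neq0 _ _ _ _ _ _ _ (cont_of_derivable d1); rewrite E => /(_ _ a0).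
  by apply: filterS => t; apply: contra => /eqP ->.
Qed.

End Scal.

Section Mat.
Variable R : realType.
Local Open Scope complex_scope.
Implicit Types x : R.

Definition mder m n (F : R -> 'M[R[i]]_(m, n)) x (D : 'M[R[i]]_(m, n)) :=
  forall i j, cder (fun t => F t i j) x (D i j).
Definition mdable m n (F : R -> 'M[R[i]]_(m, n)) x :=
  forall i j, cdable (fun t => F t i j) x.
Definition mdv m n (F : R -> 'M[R[i]]_(m, n)) x : 'M[R[i]]_(m, n) :=
  \matrix_(i, j) cdv (fun t => F t i j) x.

Lemma mdable_mder m n (F : R -> 'M[R[i]]_(m, n)) x : mdable F x -> mder F x (mdv F x).
Proof. by move=> H i j; rewrite mxE; apply: cdable_cder. Qed.

Lemma mder_mdable m n (F : R -> 'M[R[i]]_(m, n)) x D : mder F x D -> mdable F x.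
Proof. by move=> H i j; apply: cder_cdable (H i j). Qed.

Lemma mder_ext m n (F G : R -> 'M[R[i]]_(m, n)) x D :
  (forall t, F t = G t) -> mder G x D -> mder F x D.
Proof. by move=> e; have -> : F = G by apply/funext. Qed.

Lemma mder_eqd m n (F : R -> 'M[R[i]]_(m, n)) x D D' : D = D' -> mder F x D -> mder F x D'.
Proof. by move=> ->. Qed.

Lemma mder_unique m n (F : R -> 'M[R[i]]_(m, n)) x D D' :
  mder F x D -> mder F x D' -> D = D'.
Proof. by move=> H H'; apply/matrixP => i j; apply: cder_unique (H i j) (H' i j). Qed.

Lemma mder_near m n (F G : R -> 'M[R[i]]_(m, n)) x D :
  (\forall t \near x, F t = G t) -> mder F x D -> mder G x D.
Proof.
move=> H HF i j; apply: cder_near (HF i j); move: H; apply: filterS => t -> //.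
Qed.

Lemma mder_cst m n (A : 'M[R[i]]_(m, n)) x : mder (fun _ => A) x 0.
Proof. by move=> i j; rewrite mxE; apply: cder_cst. Qed.

Lemma mder_lin m n (A B : 'M[R[i]]_(m, n)) x : mder (fun t => A + t%:C *: B) x B.
Proof.
move=> i j; apply: cder_ext (cder_eqd _ (cder_add (cder_cst (A i j) x)
   (cder_mul (cder_id x) (cder_cst (B i j) x)))) => [t|]; first by rewrite !mxE.
by rewrite mulr0 mul1r !add0r.
Qed.

Lemma mder_add m n (F G : R -> 'M[R[i]]_(m, n)) x DF DG :
  mder F x DF -> mder G x DG -> mder (fun t => F t + G t) x (DF + DG).
Proof.
move=> HF HG i j; apply: cder_ext (cder_eqd _ (cder_add (HF i j) (HG i j))) => [t|];
  by rewrite !mxE.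
Qed.

Lemma mder_opp m n (F : R -> 'M[R[i]]_(m, n)) x DF :
  mder F x DF -> mder (fun t => - F t) x (- DF).
Proof.
move=> HF i j; apply: cder_ext (cder_eqd _ (cder_opp (HF i j))) => [t|];
  by rewrite !mxE.
Qed.

Lemma mder_mul m n k (F : R -> 'M[R[i]]_(m, n)) (G : R -> 'M[R[i]]_(n, k)) x DF DG :
  mder F x DF -> mder G x DG -> mder (fun t => F t *m G t) x (F x *m DG + DF *m G x).
Proof.
move=> HF HG i j.
apply: cder_ext (cder_eqd _ (cder_sum (index_enum 'I_n) xpredT
   (fun l => cder_mul (HF i l) (HG l j)))) => [t|]; first by rewrite !mxE.
by rewrite !mxE -big_split.
Qed.

Lemma mdable_det n (F : R -> 'M[R[i]]_n) x : mdable F x -> cdable (fun t => \det (F t)) x.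
Proof.
move=> H; apply: cdable_sum => s; apply: cdable_mul; first exact: cdable_cst.
by apply: cdable_prod => i; apply: H.
Qed.

Lemma mdable_adj n (F : R -> 'M[R[i]]_n) x : mdable F x -> mdable (fun t => \adj (F t)) x.
Proof.
move=> H i j; apply: cdable_ext => [t|]; first by rewrite mxE /cofactor.
apply: cdable_mul; first exact: cdable_cst.
apply: (@mdable_det _ (fun t => row' j (col' i (F t)))) => k l.
by apply: cdable_ext (H _ _) => t; rewrite !mxE.
Qed.

Lemma mdable_inv n (F : R -> 'M[R[i]]_n) x : mdable F x -> \det (F x) != 0 ->
  mdable (fun t => invmx (F t)) x.
Proof.
move=> H nz i j.
have hd := mdable_det H.
have nr := cdable_near_neq0 hd nz.
apply: (@cdable_near _ (fun t => (\det (F t))^-1 * \adj (F t) i j)).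
  move: nr; apply: filterS => t nzt.
  have ut : F t \in unitmx by rewrite unitmxE unitfE.
  by rewrite /invmx ut [in RHS]mxE.
by apply: cdable_mul; [apply: cdable_inv | apply: mdable_adj].
Qed.

Lemma near_unit n (F : R -> 'M[R[i]]_n) x : mdable F x -> \det (F x) != 0 ->
  \forall t \near x, F t \in unitmx.
Proof.
move=> H nz; have := cdable_near_neq0 (mdable_det H) nz.
by apply: filterS => t nzt; rewrite unitmxE unitfE.
Qed.

Lemma mder_inv n (F : R -> 'M[R[i]]_n) x D : mder F x D -> \det (F x) != 0 ->
  mder (fun t => invmx (F t)) x (- (invmx (F x) *m D *m invmx (F x))).
Proof.
move=> H nz.
have HI := mdable_mder (mdable_inv (mder_mdable H) nz).
set D' := mdv _ _ in HI.
have Hu : F x \in unitmx by rewrite unitmxE unitfE.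
have HP := mder_mul H HI.
have H1 : mder (fun t => F t *m invmx (F t)) x 0.
  apply: mder_near (mder_cst 1%:M x).
  move: (near_unit (mder_mdable H) nz); apply: filterS => t ut.
  by rewrite mulmxV.
have E := mder_unique HP H1.
suff <- : D' = - (invmx (F x) *m D *m invmx (F x)) by [].
have : invmx (F x) *m (F x *m D' + D *m invmx (F x)) = 0 by rewrite E mulmx0.
rewrite mulmxDr mulmxA mulVmx // mul1mx mulmxA => /eqP.
by rewrite addr_eq0 => /eqP.
Qed.


Lemma mder_mulE m n k (F : R -> 'M[R[i]]_(m, n)) (G : R -> 'M[R[i]]_(n, k)) x DF DG A B :
  mder F x DF -> mder G x DG -> F x = A -> G x = B ->
  mder (fun t => F t *m G t) x (A *m DG + DF *m B).
Proof. by move=> HF HG <- <-; apply: mder_mul. Qed.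

Lemma mder_invE n (F : R -> 'M[R[i]]_n) x D A : mder F x D -> F x = A -> \det A != 0 ->
  mder (fun t => invmx (F t)) x (- (invmx A *m D *m invmx A)).
Proof. by move=> H <-; apply: mder_inv. Qed.
End Mat.


Section Comb.
Variables (R : realType) (p r : nat).
Local Open Scope complex_scope.
Local Notation HM := (hmat R (p + (p + r)) p).

Definition rowUV (Q : HM) : 'M[R[i]]_(r, p + p) := row_mx (blkU Q) (- blkV Q).

Definition hdirn_def (a : 'I_(p + (p + r))) (b : 'I_p) (k : nat) : HM :=
  match k with
  | 0 => (delta_mx a b, 0)
  | 1 => ('i%C *: delta_mx a b, 0)
  | 2 => (0, delta_mx a b)
  | _ => (0, 'i%C *: delta_mx a b)
  end.

Fact hdirn_key : unit. Proof. by []. Qed.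
Definition hdirn := locked_with hdirn_key hdirn_def.
Lemma hdirnE : hdirn = hdirn_def. Proof. exact: locked_withE. Qed.
Lemma hdirE a b (k : 'I_4) : @hdir R _ _ a b k = hdirn a b (val k).
Proof. by rewrite hdirnE. Qed.

Lemma sum4 (G : nat -> R[i]) : \sum_(k < 4) G (val k) = G 0%N + G 1%N + G 2%N + G 3%N.
Proof. by rewrite !big_ord_recl big_ord0 /= addr0 !addrA. Qed.

Lemma usub_dl n1 n2 m (i : 'I_n1) (j : 'I_m) :
  usubmx (delta_mx (lshift n2 i) j : 'M[R[i]]_(n1 + n2, m)) = delta_mx i j.
Proof. by apply/matrixP => x y; rewrite !mxE eq_lshift. Qed.
Lemma dsub_dl n1 n2 m (i : 'I_n1) (j : 'I_m) :
  dsubmx (delta_mx (lshift n2 i) j : 'M[R[i]]_(n1 + n2, m)) = 0.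
Proof. by apply/matrixP => x y; rewrite !mxE eq_rlshift. Qed.
Lemma usub_dr n1 n2 m (i : 'I_n2) (j : 'I_m) :
  usubmx (delta_mx (rshift n1 i) j : 'M[R[i]]_(n1 + n2, m)) = 0.
Proof. by apply/matrixP => x y; rewrite !mxE eq_lrshift. Qed.
Lemma dsub_dr n1 n2 m (i : 'I_n2) (j : 'I_m) :
  dsubmx (delta_mx (rshift n1 i) j : 'M[R[i]]_(n1 + n2, m)) = delta_mx i j.
Proof. by apply/matrixP => x y; rewrite !mxE eq_rshift. Qed.

Lemma conj_i : ('i : R[i])^* = - 'i.
Proof. by apply/eqP; rewrite eq_complex /= oppr0 !eqxx. Qed.

Lemma cconjZ m n c (A : 'M[R[i]]_(m, n)) : cconj (c *: A) = conjc c *: cconj A.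
Proof. by apply/matrixP => x y; rewrite !mxE rmorphM. Qed.
Lemma cconj_delta m n (i : 'I_m) (j : 'I_n) : cconj (delta_mx i j : 'M[R[i]]_(m, n)) = delta_mx i j.
Proof. by rewrite /cconj map_delta_mx. Qed.
Lemma cconj0 m n : cconj (0 : 'M[R[i]]_(m, n)) = 0.
Proof. by rewrite /cconj map_mx0. Qed.

Ltac simpM := rewrite hdirnE /hdirn_def /Mstar /rowUV /blkZ /blkX /blkY /blkW /blkU /blkV /=
  ?linearZ /= ?linear0 ?usub_dl ?dsub_dl ?usub_dr ?dsub_dr ?linearZ /= ?linear0
  ?usub_dl ?dsub_dl ?usub_dr ?dsub_dr ?cconjZ ?cconj_delta ?cconj0 ?conj_i
  ?scaler0 ?subr0 ?sub0r ?addr0 ?add0r ?oppr0 ?row_mx0 ?block_mx0.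

Ltac finM := rewrite ?scaleN1r ?scaler0 ?oppr0 ?row_mx0 ?block_mx0 ?scalerN ?scaleNr ?opprK; try done.

Section Z.
Variables (i : 'I_p) (b : 'I_p).
Let e : 'M[R[i]]_p := delta_mx i b.
Let aZ : 'I_(p + (p + r)) := lshift (p + r) i.
Let aX : 'I_(p + (p + r)) := rshift p (lshift r i).
Lemma RZ k : rowUV (hdirn aZ b k) = 0.
Proof. by case: k => [|[|[|k]]]; simpM; finM. Qed.
Lemma RX k : rowUV (hdirn aX b k) = 0.
Proof. by case: k => [|[|[|k]]]; simpM; finM. Qed.
Lemma MZ0 : Mstar (hdirn aZ b 0) = block_mx e 0 0 e.
Proof. rewrite ?scale_block_mx ?scale_row_mx; simpM; finM. Qed.
Lemma MZ1 : Mstar (hdirn aZ b 1) = 'i *: block_mx e 0 0 (- e).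
Proof. rewrite ?scale_block_mx ?scale_row_mx; simpM; finM. Qed.
Lemma MZ2 : Mstar (hdirn aZ b 2) = block_mx 0 (- e) e 0.
Proof. rewrite ?scale_block_mx ?scale_row_mx; simpM; finM. Qed.
Lemma MZ3 : Mstar (hdirn aZ b 3) = - 'i *: block_mx 0 e e 0.
Proof. rewrite ?scale_block_mx ?scale_row_mx; simpM; finM. Qed.
Lemma MX0 : Mstar (hdirn aX b 0) = -1 *: block_mx e 0 0 (- e).
Proof. rewrite ?scale_block_mx ?scale_row_mx; simpM; finM. Qed.
Lemma MX1 : Mstar (hdirn aX b 1) = - 'i *: block_mx e 0 0 e.
Proof. rewrite ?scale_block_mx ?scale_row_mx; simpM; finM. Qed.
Lemma MX2 : Mstar (hdirn aX b 2) = block_mx 0 e e 0.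
Proof. rewrite ?scale_block_mx ?scale_row_mx; simpM; finM. Qed.
Lemma MX3 : Mstar (hdirn aX b 3) = - 'i *: block_mx 0 (- e) e 0.
Proof. rewrite ?scale_block_mx ?scale_row_mx; simpM; finM. Qed.
End Z.

Section U.
Variables (i : 'I_r) (b : 'I_p).
Let e : 'M[R[i]]_(r, p) := delta_mx i b.
Let aU : 'I_(p + (p + r)) := rshift p (rshift p i).
Lemma MU k : Mstar (hdirn aU b k) = 0.
Proof. by case: k => [|[|[|k]]]; simpM; finM. Qed.
Lemma RU0 : rowUV (hdirn aU b 0) = row_mx e 0.
Proof. rewrite ?scale_block_mx ?scale_row_mx; simpM; finM. Qed.
Lemma RU1 : rowUV (hdirn aU b 1) = 'i *: row_mx e 0.
Proof. rewrite ?scale_block_mx ?scale_row_mx; simpM; finM. Qed.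
Lemma RU2 : rowUV (hdirn aU b 2) = row_mx 0 (- e).
Proof. rewrite ?scale_block_mx ?scale_row_mx; simpM; finM. Qed.
Lemma RU3 : rowUV (hdirn aU b 3) = 'i *: row_mx 0 (- e).
Proof. rewrite ?scale_block_mx ?scale_row_mx; simpM; finM. Qed.
End U.

Lemma sumk a b (Fn : 'M[R[i]]_(r, p + p) -> 'M[R[i]]_(p + p) -> R[i]) :
  \sum_(k < 4) Fn (rowUV (@hdir R _ _ a b k)) (Mstar (@hdir R _ _ a b k)) =
  Fn (rowUV (hdirn a b 0)) (Mstar (hdirn a b 0)) +
  Fn (rowUV (hdirn a b 1)) (Mstar (hdirn a b 1)) +
  Fn (rowUV (hdirn a b 2)) (Mstar (hdirn a b 2)) +
  Fn (rowUV (hdirn a b 3)) (Mstar (hdirn a b 3)).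
Proof. rewrite -(sum4 (fun n => Fn (rowUV (hdirn a b n)) (Mstar (hdirn a b n)))).
by apply: eq_bigr => k _; rewrite hdirE. Qed.

Lemma add3 (A B C : R[i]) : C = 0 -> A + B = 0 -> A + (B + C) = 0.
Proof. by move=> -> H; rewrite addr0. Qed.

Lemma addE (A A' B B' : R[i]) : A = A' -> B = B' -> A' + B' = 0 -> A + B = 0.
Proof. by move=> -> ->. Qed.

Section SD.
Variable (Fn : 'M[R[i]]_(r, p + p) -> 'M[R[i]]_(p + p) -> R[i]).
Hypothesis hom : forall c y X, Fn (c *: y) (c *: X) = c ^+ 2 * Fn y X.

Lemma hom0 X c : Fn 0 (c *: X) = c ^+ 2 * Fn 0 X.
Proof. by rewrite -(hom c 0 X) scaler0. Qed.
Lemma homy y c : Fn (c *: y) 0 = c ^+ 2 * Fn y 0.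
Proof. by rewrite -(hom c y 0) scaler0. Qed.

Lemma pairU i b : \sum_(k < 4) Fn (rowUV (@hdir R _ _ (rshift p (rshift p i)) b k))
        (Mstar (@hdir R _ _ (rshift p (rshift p i)) b k)) = 0.
Proof.
rewrite sumk !MU RU0 RU1 RU2 RU3 !homy.
by rewrite sqr_i !mulN1r subrr add0r subrr.
Qed.

Lemma pairZX i b :
  \sum_(k < 4) Fn (rowUV (@hdir R _ _ (lshift (p + r) i) b k))
        (Mstar (@hdir R _ _ (lshift (p + r) i) b k)) +
  \sum_(k < 4) Fn (rowUV (@hdir R _ _ (rshift p (lshift r i)) b k))
        (Mstar (@hdir R _ _ (rshift p (lshift r i)) b k)) = 0.
Proof.
apply: (addE (sumk _ _ _) (sumk _ _ _)).
rewrite !RZ !RX MZ0 MZ1 MZ2 MZ3 MX0 MX1 MX2 MX3 !hom0.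
rewrite !sqrrN sqr_i expr1n !mulN1r !mul1r.
set a1 := Fn 0 _; set a2 := Fn 0 _; set a3 := Fn 0 _; set a4 := Fn 0 _.
move: a1 a2 a3 a4 => a1 a2 a3 a4; ring.
Qed.

Lemma sum_dirs :
  \sum_(a < p + (p + r)) \sum_(b < p) \sum_(k < 4)
     Fn (rowUV (@hdir R _ _ a b k)) (Mstar (@hdir R _ _ a b k)) = 0.
Proof.
rewrite big_split_ord /= big_split_ord /=.
apply: add3.
  by apply: big1 => i _; apply: big1 => b _; apply: pairU.
rewrite -big_split /=; apply: big1 => i _; rewrite -big_split /=.
by apply: big1 => b _; apply: pairZX.
Qed.
End SD.

End Comb.


Section Phi.
Variables (R : realType) (p r : nat).
Local Open Scope complex_scope.
Local Notation HM := (hmat R (p + (p + r)) p).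

Lemma C0 : (0 : R)%:C = 0 :> R[i]. Proof. by []. Qed.

Lemma hadd0 (Q E : HM) : hadd Q (hscale 0 E) = Q.
Proof. by case: Q => A B; rewrite /hadd /hscale /= C0 !scale0r !addr0. Qed.

Lemma cconjD m n (A B : 'M[R[i]]_(m, n)) : cconj (A + B) = cconj A + cconj B.
Proof. by apply/matrixP => x y; rewrite !mxE rmorphD. Qed.

Lemma cconjZR m n (t : R) (A : 'M[R[i]]_(m, n)) : cconj (t%:C *: A) = t%:C *: cconj A.
Proof. by rewrite cconjZ conjc_real. Qed.

Lemma Mstar_lin (Q E : HM) t : Mstar (hadd Q (hscale t E)) = Mstar Q + t%:C *: Mstar E.
Proof.
rewrite /Mstar /blkZ /blkX /blkY /blkW /hadd /hscale /= !linearD !linearZ /=.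
rewrite !cconjD !cconjZR scale_block_mx add_block_mx.
by congr block_mx; rewrite ?scalerBr ?scalerDr ?scalerN addrACA.
Qed.

Lemma rowUV_lin (Q E : HM) t : rowUV (hadd Q (hscale t E)) = rowUV Q + t%:C *: rowUV E.
Proof.
rewrite /rowUV /blkU /blkV /hadd /hscale /= !linearD !linearZ /=.
by rewrite scale_row_mx add_row_mx scalerN.
Qed.

Lemma PhiE (Q : HM) : Phistar Q = rowUV Q *m invmx (Mstar Q).
Proof. by []. Qed.

Definition D1f (r0 : 'M[R[i]]_(r, p + p)) (N : 'M[R[i]]_(p + p)) y X :=
  y *m N - r0 *m (N *m X *m N).

Definition D1 (Q E : HM) := D1f (rowUV Q) (invmx (Mstar Q)) (rowUV E) (Mstar E).

Lemma der_Phi (Q E : HM) : \det (Mstar Q) != 0 ->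
  mder (fun t => Phistar (hadd Q (hscale t E))) 0 (D1 Q E).
Proof.
move=> nz.
apply: mder_ext => [t|]; first by rewrite PhiE Mstar_lin rowUV_lin.
apply: mder_eqd (mder_mulE (mder_lin _ _ _) (mder_invE (mder_lin _ _ _) _ nz) _ _).
- by rewrite /D1 /D1f mulmxN addrC.
- by rewrite C0 scale0r addr0.
- by rewrite C0 scale0r addr0.
- by rewrite C0 scale0r addr0.
Qed.


Lemma cder_hpartial (f : HM -> R[i]) (Q E : HM) d :
  cder (hline f Q E) 0 d -> hderivable f E Q /\ hpartial f E Q = d.
Proof.
case=> h1 h2; split; first by split; [exact: (@ex_derive _ _ _ _ _ _ _ h1) | exact: (@ex_derive _ _ _ _ _ _ _ h2)].
rewrite /hpartial !derive1E (@derive_val _ _ _ _ _ _ _ h1) (@derive_val _ _ _ _ _ _ _ h2).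
by rewrite -complexE.
Qed.

Lemma hpartial_Phi (Q E : HM) a b : \det (Mstar Q) != 0 ->
  hderivable (fun Q => Phistar Q a b) E Q /\
  hpartial (fun Q => Phistar Q a b) E Q = D1 Q E a b.
Proof. by move=> nz; apply: cder_hpartial; apply: (der_Phi E nz). Qed.

Lemma near_det (Q E : HM) : \det (Mstar Q) != 0 ->
  \forall s \near (0 : R), \det (Mstar (hadd Q (hscale s E))) != 0.
Proof.
move=> nz.
have := cdable_near_neq0 (mdable_det (mder_mdable (mder_lin (Mstar Q) (Mstar E) 0))).
rewrite C0 scale0r addr0 => /(_ nz).
by apply: filterS => s; rewrite Mstar_lin.
Qed.

Definition D2f (r0 : 'M[R[i]]_(r, p + p)) (N : 'M[R[i]]_(p + p)) y X y' X' :=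
  let N' := - (N *m X' *m N) in
  (y *m N' + 0 *m N) + - (r0 *m ((N *m X) *m N' + (N *m 0 + N' *m X) *m N) + y' *m (N *m X *m N)).

Definition D2 (Q E E' : HM) :=
  D2f (rowUV Q) (invmx (Mstar Q)) (rowUV E) (Mstar E) (rowUV E') (Mstar E').

Lemma der_D1 (Q E E' : HM) : \det (Mstar Q) != 0 ->
  mder (fun s => D1 (hadd Q (hscale s E')) E) 0 (D2 Q E E').
Proof.
move=> nz.
apply: mder_ext => [t|]; first by rewrite /D1 /D1f Mstar_lin rowUV_lin.
have HN := mder_invE (mder_lin (Mstar Q) (Mstar E') 0) (erefl _) _.
rewrite C0 scale0r addr0 in HN; have {}HN := HN nz.
apply: mder_eqd (mder_add (mder_mulE (mder_cst _ _) HN (erefl _) _)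
  (mder_opp (mder_mulE (mder_lin _ _ _) (mder_mulE (mder_mulE HN (mder_cst _ _) _ _) HN _ _) _ _))).
- by [].
all: by rewrite ?C0 ?scale0r ?addr0.
Qed.

Lemma hpartial2 (Q E E' : HM) a b : \det (Mstar Q) != 0 ->
  hderivable (hpartial (fun Q => Phistar Q a b) E) E' Q /\
  hpartial (hpartial (fun Q => Phistar Q a b) E) E' Q = D2 Q E E' a b.
Proof.
move=> nz; apply: cder_hpartial.
apply: cder_near (der_D1 E E' nz a b).
move: (near_det E' nz); apply: filterS => s nzs.
by rewrite /hline (proj2 (hpartial_Phi E a b nzs)).
Qed.

End Phi.


Section GL.
Variables (R : realType) (p r : nat).
Local Open Scope complex_scope.
Local Notation HM := (hmat R (p + (p + r)) p).

Definition Mg (g : hmat R p p) : 'M[R[i]]_(p + p) :=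
  block_mx g.1 (- g.2) (cconj g.2) (cconj g.1).

Lemma cconjB m n (A B : 'M[R[i]]_(m, n)) : cconj (A - B) = cconj A - cconj B.
Proof. by apply/matrixP => x y; rewrite !mxE rmorphB. Qed.
Lemma cconjM m n k (A : 'M[R[i]]_(m, n)) (B : 'M[R[i]]_(n, k)) :
  cconj (A *m B) = cconj A *m cconj B.
Proof. by rewrite /cconj map_mxM. Qed.
Lemma cconjK m n (A : 'M[R[i]]_(m, n)) : cconj (cconj A) = A.
Proof. by apply/matrixP => x y; rewrite !mxE conjcK. Qed.
Lemma cconjN m n (A : 'M[R[i]]_(m, n)) : cconj (- A) = - cconj A.
Proof. by apply/matrixP => x y; rewrite !mxE rmorphN. Qed.

Section Z.
Variable V : zmodType.
Implicit Types a b c d : V.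
Lemma z1 a b c d : a - b + (- c - - d) = a - c + (d - b).
Proof. by rewrite opprK addrACA (addrC (-b)). Qed.
Lemma z2 a b c d : a + b + (- c - d) = - c - - a + (b - d).
Proof. by rewrite opprK addrACA (addrC (-c)). Qed.
Lemma z3 a b c d : a + b + (c + d) = b + d + (c + a).
Proof. by rewrite addrACA addrC (addrC a). Qed.
Lemma z4 a b c d : a - b + (c - d) = - d - b + (a + c).
Proof. by rewrite addrACA addrC (addrC (-b)). Qed.
End Z.

Lemma Mstar_mul (Q : HM) (g : hmat R p p) : Mstar (hmul Q g) = Mstar Q *m Mg g.
Proof.
rewrite /Mstar /Mg /blkZ /blkX /blkY /blkW /hmul /= mulmx_block.
rewrite ?linearB ?linearD /= -?mul_usub_mx -?mul_dsub_mx -?mul_usub_mx.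
rewrite ?cconjB ?cconjD ?cconjM ?cconjK.
rewrite ?mulmxBl ?mulmxDl ?mulmxN ?mulmxBr ?mulmxDr.
congr block_mx; [exact: z1 | exact: z2 | exact: z3 | exact: z4].
Qed.

Lemma rowUV_mul (Q : HM) (g : hmat R p p) : rowUV (hmul Q g) = rowUV Q *m Mg g.
Proof.
rewrite /rowUV /Mg /blkU /blkV /hmul /= mul_row_block.
rewrite ?linearB ?linearD /= -?mul_usub_mx -?mul_dsub_mx -?mul_usub_mx -?mul_dsub_mx.
by rewrite ?mulmxN ?mulNmx ?opprD.
Qed.

Lemma Mg_mul (g h : hmat R p p) : Mg (hmul g h) = Mg g *m Mg h.
Proof.
rewrite /Mg /hmul /= mulmx_block.
rewrite ?cconjB ?cconjD ?cconjM ?cconjK ?mulmxN ?mulNmx ?opprD.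
by congr block_mx; rewrite addrC.
Qed.

Lemma cconj1 n : cconj (1%:M : 'M[R[i]]_n) = 1%:M.
Proof. by apply/matrixP => x y; rewrite !mxE rmorph_nat. Qed.

Lemma Mg_one : Mg (hone R p) = 1%:M.
Proof. by rewrite /Mg /hone /= oppr0 cconj0 cconj1 -scalar_mx_block. Qed.

Lemma Mg_unit (g : hmat R p p) : hinvertible g -> Mg g \in unitmx.
Proof.
case=> h [gh _]; have := Mg_mul g h; rewrite gh Mg_one => /esym/mulmx1_unit.
by case.
Qed.

Lemma Phi_inv (Q : HM) (g : hmat R p p) : \det (Mstar Q) != 0 -> hinvertible g ->
  Phistar (hmul Q g) = Phistar Q.
Proof.
move=> nz /Mg_unit uB; rewrite !PhiE Mstar_mul rowUV_mul.
have uA : Mstar Q \in unitmx by rewrite unitmxE unitfE.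
have uAB : Mstar Q *m Mg g \in unitmx by rewrite unitmx_mul uA.
transitivity (rowUV Q *m invmx (Mstar Q) *m (Mstar Q *m Mg g *m invmx (Mstar Q *m Mg g))).
  by rewrite !mulmxA mulmxKV.
by rewrite mulmxV // mulmx1.
Qed.
End GL.


Section Hom.
Variables (R : realType) (p r : nat).
Local Open Scope complex_scope.
Variables (r0 : 'M[R[i]]_(r, p + p)) (N : 'M[R[i]]_(p + p)).

Lemma D1f_hom c y X : D1f r0 N (c *: y) (c *: X) = c *: D1f r0 N y X.
Proof. by rewrite /D1f; do 3 rewrite -?scalemxAl -?scalemxAr; rewrite scalerBr. Qed.

Lemma D2f_hom c y X : D2f r0 N (c *: y) (c *: X) (c *: y) (c *: X) = (c ^+ 2) *: D2f r0 N y X y X.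
Proof.
rewrite /D2f !mulmx0 !mul0mx !addr0 !add0r.
do 4 rewrite -?scalemxAl -?scalemxAr -?scalerN ?scalerA.
rewrite -scalerDr -scalemxAr -scalerDr -scalerN -scalerDr expr2.
done.
Qed.
End Hom.

Theorem proposition10p1 (R : realType) (p r : nat) (hp : (0 < p)%N) (hr : (0 < r)%N) :
  (* GL_p(H)-invariance of Phi* on V*_{pq}(H), q = p + r *)
  (forall (Q : hmat R (p + (p + r)) p) (g : hmat R p p),
      in_Vstar Q -> hinvertible g ->
      Phistar (hmul Q g) = Phistar Q) /\
  (* the components Phi*_{ab} form an orthogonal harmonic family on V* *)
  orthogonal_harmonic_family
    (fun ab : 'I_r * 'I_(p + p) =>
       fun Q : hmat R (p + (p + r)) p => Phistar Q ab.1 ab.2)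
    (@in_Vstar R p r).
Proof.
split.
  by move=> Q g [_ nz] hg; apply: Phi_inv.
move=> Q [_ nz]; split; [|split].
- move=> [a b] a1 b1 k a1' b1' k' /=; split.
    exact: (hpartial_Phi (@hdir R _ _ a1 b1 k) a b nz).1.
  exact: (hpartial2 (@hdir R _ _ a1 b1 k) (@hdir R _ _ a1' b1' k') a b nz).1.
- move=> [a b] /=; rewrite /tau.
  pose Fn := fun y X => D2f (rowUV Q) (invmx (Mstar Q)) y X y X a b.
  have hom : forall c y X, Fn (c *: y) (c *: X) = c ^+ 2 * Fn y X.
    by move=> c y X; rewrite /Fn D2f_hom mxE.
  apply: etrans (sum_dirs hom).
  apply: eq_bigr => a1 _; apply: eq_bigr => b1 _; apply: eq_bigr => k _.
  exact: (hpartial2 (@hdir R _ _ a1 b1 k) (@hdir R _ _ a1 b1 k) a b nz).2.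
- move=> [a b] [c d] /=; rewrite /kappa.
  pose Fn := fun y X => D1f (rowUV Q) (invmx (Mstar Q)) y X a b *
                        D1f (rowUV Q) (invmx (Mstar Q)) y X c d.
  have hom : forall s y X, Fn (s *: y) (s *: X) = s ^+ 2 * Fn y X.
    by move=> s y X; rewrite /Fn D1f_hom !mxE expr2 mulrACA.
  apply: etrans (sum_dirs hom).
  apply: eq_bigr => a1 _; apply: eq_bigr => b1 _; apply: eq_bigr => k _.
  rewrite (hpartial_Phi (@hdir R _ _ a1 b1 k) a b nz).2.
  by rewrite (hpartial_Phi (@hdir R _ _ a1 b1 k) c d nz).2.
Qed.
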